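(* For every $n\ge1$, the polynomial $T_{2n}(x)+T_{2n}(y)\in\mathbb{C}[x,y]$ is a product of exactly $n$ irreducible factors (each of which is not a constant).
   Context: $T_k$ denotes the Chebycheff polynomial of degree $k$, defined by $T_k(\cos\theta)=\cos(k\theta)$. *)

(* Defs.v *)
From HB Require Import structures.
From mathcomp Require Import all_boot all_order all_algebra.
From mathcomp Require Import reals.
From mathcomp Require Import complex.
Set Implicit Arguments. Unset Strict Implicit. Unset Printing Implicit Defensive.
Import Order.TTheory GRing.Theory Num.Theory.
Local Open Scope ring_scope.

(* Chebyshev polynomials of the first kind, via the standard recurrence
   T_0 = 1, T_1 = X, T_(k+2) = 2 X T_(k+1) - T_k; these are exactly the
   polynomials with T_k(cos t) = cos(k t). *)
Fixpoint cheb_pair (R : nzRingType) (k : nat) : {poly R} * {poly R} :=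
  match k with
  | 0 => (1, 'X)
  | k'.+1 => let p := cheb_pair R k' in (p.2, 2%:R *: 'X * p.2 - p.1)
  end.
Definition chebT (R : nzRingType) (k : nat) : {poly R} := (cheb_pair R k).1.

(* Bivariate polynomials in x (inner variable) and y (outer variable). *)
Definition polyx (R : nzRingType) (p : {poly R}) : {poly {poly R}} := p%:P.
Definition polyy (R : nzRingType) (p : {poly R}) : {poly {poly R}} :=
  map_poly polyC p.

Definition irreducible_elt (A : idomainType) (a : A) : Prop :=
  [/\ a != 0, a \isn't a GRing.unit &
      forall b c : A, a = b * c -> b \is a GRing.unit \/ c \is a GRing.unit].

Definition is_nonconstant2 (A : nzRingType) (P : {poly {poly A}}) : Prop :=
  ~ exists c : A, P = (c%:P)%:P.

(* Main.v *)
Require Import Defs.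
From HB Require Import structures.
From mathcomp Require Import all_boot all_order all_algebra.
From mathcomp Require Import reals complex.
From mathcomp Require Import ring lra zify.
Import Order.TTheory GRing.Theory Num.Theory.
Local Open Scope ring_scope.

Section Cheb.
Variable F : numClosedFieldType.

Lemma chebT0 : chebT F 0 = 1. Proof. by []. Qed.
Lemma chebT1 : chebT F 1 = 'X. Proof. by []. Qed.
Lemma chebTSS k : chebT F k.+2 = 2%:R *: 'X * chebT F k.+1 - chebT F k.
Proof. by []. Qed.

Lemma chebT_eval (u : F) m : u != 0 ->
  (chebT F m).[(u + u^-1) / 2%:R] = (u ^+ m + u^-1 ^+ m) / 2%:R.
Proof.
move=> u0.
have h2 : (2%:R : F) != 0 by rewrite pnatr_eq0.
suff: forall k, (chebT F k).[(u + u^-1) / 2%:R] = (u ^+ k + u^-1 ^+ k) / 2%:R /\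
   (chebT F k.+1).[(u + u^-1) / 2%:R] = (u ^+ k.+1 + u^-1 ^+ k.+1) / 2%:R by move=> /(_ m) [].
elim=> [|k [IH1 IH2]].
  rewrite chebT0 chebT1 hornerC hornerX !expr0 !expr1.
  by split; field.
split; first exact: IH2.
rewrite chebTSS hornerD hornerN hornerM -mul_polyC hornerM hornerC hornerX IH1 IH2.
rewrite !exprS; field => //=.
Qed.

Lemma chebT_size k : size (chebT F k.+1) = k.+2 /\ lead_coef (chebT F k.+1) = 2%:R ^+ k.
Proof.
have h2 : (2%:R : F) != 0 by rewrite pnatr_eq0.
suff: size (chebT F k) = k.+1 /\ size (chebT F k.+1) = k.+2 /\ lead_coef (chebT F k.+1) = 2%:R ^+ k by case=> _.
elim: k => [|k [IH0 [IH1 IH2]]].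
  by rewrite chebT0 chebT1 size_polyX size_poly1 lead_coefX expr0.
have hs : size (2%:R *: 'X * chebT F k.+1) = k.+3.
  rewrite -scalerAl size_scale // size_mul ?polyX_eq0 // ?size_polyX ?IH1 //.
  by rewrite -size_poly_eq0 IH1.
have hl : (size (- chebT F k) < size (2%:R *: 'X * chebT F k.+1)%R)%N.
  by rewrite size_polyN hs IH0.
split=> //; rewrite chebTSS size_polyDl // lead_coefDl //; split=> //.
by rewrite -scalerAl lead_coefZ lead_coefM lead_coefX mul1r IH2 exprS.
Qed.

Lemma chebT_ne0 k : chebT F k != 0.
Proof.
case: k => [|k]; first by rewrite chebT0 oner_eq0.
by rewrite -size_poly_eq0; case: (chebT_size k) => ->.
Qed.

Lemma chebT_pm1 k (e : F) : (e = 1 \/ e = -1) -> (chebT F k).[e] != 0.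
Proof.
have h2 : (2%:R : F) != 0 by rewrite pnatr_eq0.
move=> he; have e0 : e != 0 by case: he => ->; rewrite ?oppr_eq0 oner_eq0.
have einv : e^-1 = e by case: he => ->; rewrite ?invrN invr1.
have -> : e = (e + e^-1) / 2%:R by rewrite einv; field.
rewrite chebT_eval // einv mulf_neq0 ?invr_eq0 // -mulr2n mulrn_eq0 /= expf_eq0 negb_and e0 orbT //.
Qed.
End Cheb.
Section Conic.
Variable F : numClosedFieldType.

Definition Mf (r : F) : {poly {poly F}} :=
  ('X + (- (2%:R * r)%:P * 'X)%:P) * 'X + ('X ^+ 2 + (r ^+ 2 - 1)%:P)%:P.
Definition Qf (k r : F) : {poly {poly F}} := (k%:P)%:P * Mf r.

Lemma Mf_size r : size (Mf r) = 3.
Proof. by rewrite /Mf size_MXaddC size_XaddC -size_poly_eq0 size_XaddC. Qed.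

Lemma Mf_lead r : lead_coef (Mf r) = 1.
Proof.
rewrite /Mf lead_coefDl ?lead_coefMX ?lead_coefXaddC //.
by rewrite size_polyC size_mul ?polyX_eq0 -?size_poly_eq0 ?size_XaddC // size_polyX; case: eqP.
Qed.

Lemma Qf_size k r : k != 0 -> size (Qf k r) = 3.
Proof. by move=> k0; rewrite /Qf size_Cmul ?polyC_eq0 // Mf_size. Qed.

Lemma Qf_lead k r : lead_coef (Qf k r) = k%:P.
Proof. by rewrite /Qf lead_coefM lead_coefC Mf_lead mulr1. Qed.

Lemma Qf_eval k r x y :
  ((Qf k r).[y%:P]).[x] = k * (y ^+ 2 - 2%:R * r * x * y + x ^+ 2 + r ^+ 2 - 1).
Proof.
rewrite /Qf /Mf !hornerE /=. ring.
Qed.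

Lemma no_root_Mf r (a : {poly F}) : r ^+ 2 != 1 -> (Mf r).[a] != 0.
Proof.
move=> hr; apply/negP => /eqP E.
have h2 : (2%:R : F) != 0 by rewrite pnatr_eq0.
set d := 1 - r ^+ 2.
have d0 : d != 0 by rewrite subr_eq0 eq_sym.
set b := a - r%:P * 'X.
have hb : b ^+ 2 = d%:P * (1 - 'X ^+ 2).
  apply/eqP; rewrite -subr_eq0; apply/eqP; rewrite -E /Mf /b /d !hornerE /=.
  rewrite !rmorphB !rmorphM /= ?rmorphXn /= ?rmorphN ?rmorph1 /=.
  ring.
have b1 : b.[1] = 0.
  have : b.[1] ^+ 2 = 0 by rewrite -horner_exp hb !hornerE expr1n subrr mulr0.
  by move/eqP; rewrite expf_eq0 => /andP[_ /eqP].
clearbody b. have := congr1 (fun p => (deriv p).[1]) hb => /=.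
rewrite expr2 derivM !hornerE b1 mul0r mulr0 add0r.
rewrite derivM derivC mul0r add0r derivB derivC derivXn /= sub0r.
rewrite !hornerE /= => /esym/eqP.
rewrite mulf_eq0 (negPf d0) /= oppr_eq0 -mulr2n mulrn_eq0 /= oner_eq0.
by [].
Qed.

Lemma Qf_irr k r : k != 0 -> r ^+ 2 != 1 ->
  irreducible_elt (Qf k r) /\ is_nonconstant2 (Qf k r).
Proof.
move=> k0 hr; have hsQ := @Qf_size k r k0.
split; last first.
  by move=> [c E]; move: hsQ; rewrite E size_polyC; case: eqP.
have Q0 : Qf k r != 0 by rewrite -size_poly_eq0 hsQ.
split=> //; first by rewrite poly_unitE hsQ.
move=> b c E.
have b0 : b != 0 by apply: contraNneq Q0 => b0; rewrite E b0 mul0r.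
have c0 : c != 0 by apply: contraNneq Q0 => c0; rewrite E c0 mulr0.
have hs : (size b + size c).-1 = 3 by rewrite -size_mul // -E.
have hl : lead_coef b * lead_coef c = k%:P by rewrite -lead_coefM -E Qf_lead.
have ku : k%:P \is a GRing.unit by rewrite poly_unitE size_polyC k0 coefC /= unitfE.
have /andP[ub uc] : (lead_coef b \is a GRing.unit) && (lead_coef c \is a GRing.unit).
  by rewrite -unitrM hl.
have bp : (0 < size b)%N by rewrite size_poly_gt0.
have cp : (0 < size c)%N by rewrite size_poly_gt0.
case sb: (size b == 1)%N.
  left; rewrite poly_unitE sb /=; move: ub; rewrite lead_coefE.
  by move/eqP: sb => ->.
case sc: (size c == 1)%N.
  right; rewrite poly_unitE sc /=; move: uc; rewrite lead_coefE.
  by move/eqP: sc => ->.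
exfalso.
have sb2 : size b = 2.
  move/eqP: sb; move/eqP: sc; move: hs bp cp; clear; lia.
have b1u : b`_1 \is a GRing.unit by move: ub; rewrite lead_coefE sb2.
set al := - b`_0 / b`_1.
have ba : b.[al] = 0.
  rewrite horner_coef sb2 !big_ord_recr big_ord0 /= add0r expr0 mulr1 expr1.
  by rewrite /al mulrC mulrVK // subrr.
have : (Qf k r).[al] = 0 by rewrite E hornerM ba mul0r.
rewrite /Qf hornerM hornerC => /eqP; rewrite mulf_eq0 polyC_eq0 (negPf k0) /=.
by apply/negP; apply: no_root_Mf.
Qed.
End Conic.

Lemma poly_eq0_inj (A : idomainType) (g : nat -> A) (ginj : injective g) (p : {poly A}) :
  (forall i, root p (g i)) -> p = 0.
Proof.
move=> hr; apply/eqP; apply/negPn/negP => p0.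
have := max_poly_roots p0 (rs := map g (iota 0 (size p))).
rewrite size_map size_iota ltnn map_inj_uniq ?iota_uniq // => /(_ _ isT) H.
suff : false by [].
apply: H; apply/allP => z /mapP [i _ ->]; exact: hr.
Qed.

Lemma quad_id (F : numClosedFieldType) (u v z : F) : u != 0 -> v != 0 ->
  ((v + v^-1) / 2%:R) ^+ 2 - 2%:R * z * ((u + u^-1) / 2%:R) * ((v + v^-1) / 2%:R) +
      ((u + u^-1) / 2%:R) ^+ 2 + z ^+ 2 - 1 =
  ((u * v + (u * v)^-1) / 2%:R - z) * ((u * v^-1 + (u * v^-1)^-1) / 2%:R - z).
Proof.
move=> u0 v0; have h2 : (2%:R : F) != 0 by rewrite pnatr_eq0.
rewrite !invfM invrK; field.
by rewrite ?h2 ?u0 ?v0 ?mulf_neq0 ?invr_eq0.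
Qed.

Lemma fin_id (F : numClosedFieldType) (u v : F) n : u != 0 -> v != 0 ->
  (u ^+ (2 * n) + u^-1 ^+ (2 * n)) / 2%:R + (v ^+ (2 * n) + v^-1 ^+ (2 * n)) / 2%:R =
  2%:R * (((u * v) ^+ n + (u * v)^-1 ^+ n) / 2%:R) *
  (((u / v) ^+ n + (u / v)^-1 ^+ n) / 2%:R).
Proof.
move=> u0 v0; have h2 : (2%:R : F) != 0 by rewrite pnatr_eq0.
rewrite !invfM invrK mulnC !exprM !exprMn !exprVn.
have a0 : u ^+ n != 0 by rewrite expf_neq0.
have b0 : v ^+ n != 0 by rewrite expf_neq0.
move: a0 b0; set a := u ^+ n; set b := v ^+ n => a0 b0.
by field; rewrite ?h2 ?a0 ?b0 ?mulf_neq0.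
Qed.

Section Main.
Variable F : numClosedFieldType.

Lemma poly2_eq0 (P : {poly {poly F}}) : (forall x y : F, (P.[y%:P]).[x] = 0) -> P = 0.
Proof.
move=> h.
have inj1 : injective (fun i : nat => (i%:R : F)) by apply: (@mulrIn F 1); rewrite oner_eq0.
apply: (@poly_eq0_inj _ (fun i : nat => (i%:R : F)%:P)).
  by move=> i j /polyC_inj /inj1.
move=> i; apply/rootP; apply: (@poly_eq0_inj F _ inj1) => j; apply/rootP; exact: h.
Qed.

Lemma cheb_param (x : F) : exists u : F, u != 0 /\ x = (u + u^-1) / 2%:R.
Proof.
have h2 : (2%:R : F) != 0 by rewrite pnatr_eq0.
have : size (('X - (2%:R * x)%:P) * 'X + 1%:P : {poly F}) != 1%N.
  by rewrite size_MXaddC size_XsubC oner_eq0 andbF.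
move/closed_rootP => [u]; rewrite /root !hornerE => /eqP hu.
have u0 : u != 0 by apply/eqP => u0; move: hu; rewrite u0 mulr0 add0r; apply/eqP; rewrite oner_eq0.
exists u; split=> //; apply/eqP; rewrite eq_sym -subr_eq0.
have -> : (u + u^-1) / 2%:R - x = ((u - 2%:R * x) * u + 1) / (2%:R * u) by field; rewrite ?h2 ?u0 ?mulf_neq0.
by rewrite hu mul0r.
Qed.

Lemma main_eval n (lc : F) rs x y : chebT F n = lc *: \prod_(z <- rs) ('X - z%:P) ->
  (chebT F (2 * n)).[x] + (chebT F (2 * n)).[y] =
  2%:R * lc ^+ 2 * \prod_(z <- rs) (y ^+ 2 - 2%:R * z * x * y + x ^+ 2 + z ^+ 2 - 1).
Proof.
move=> hT.
have h2 : (2%:R : F) != 0 by rewrite pnatr_eq0.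
have [u [u0 ->]] := cheb_param x.
have [v [v0 ->]] := cheb_param y.
have uv0 : u * v != 0 by rewrite mulf_neq0.
have uv0' : u * v^-1 != 0 by rewrite mulf_neq0 ?invr_eq0.
set s := (u * v + (u * v)^-1) / 2%:R.
set t := (u * v^-1 + (u * v^-1)^-1) / 2%:R.
have ev z : chebT F n = lc *: \prod_(z <- rs) ('X - z%:P) ->
    (chebT F n).[z] = lc * \prod_(w <- rs) (z - w).
  by move=> ->; rewrite hornerZ horner_prod; congr (_ * _); apply: eq_bigr => w _; rewrite hornerXsubC.
rewrite (eq_bigr (fun z => (s - z) * (t - z))); last first.
  by move=> z _; rewrite /s /t quad_id.
rewrite big_split /=.
have -> : 2%:R * lc ^+ 2 * ((\prod_(i <- rs) (s - i)) * \prod_(i <- rs) (t - i)) =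
   2%:R * (chebT F n).[s] * (chebT F n).[t] by rewrite !ev //; ring.
by rewrite !chebT_eval // /s /t ?invr_eq0 // fin_id.
Qed.
End Main.

Lemma root_not_pm1 (F : numClosedFieldType) n (lc : F) rs z :
  chebT F n = lc *: \prod_(w <- rs) ('X - w%:P) -> z \in rs -> z ^+ 2 != 1.
Proof.
move=> hT zr; rewrite sqrf_eq1; apply/negP => hz.
have : (chebT F n).[z] != 0 by apply: chebT_pm1; case/orP: hz => /eqP ->; [left|right].
rewrite hT hornerZ; move: (root_prod_XsubC rs z); rewrite zr /root => /eqP ->.
by rewrite mulr0 eqxx.
Qed.

Theorem mainTheorem7 (R : realType) (n : nat) : (1 <= n)%N ->
  exists fs : seq {poly {poly R[i]}},
    [/\ size fs = n,
        (forall f, f \in fs -> irreducible_elt f /\ is_nonconstant2 f) &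
        polyx (chebT R[i] (2 * n)) + polyy (chebT R[i] (2 * n)) = \prod_(f <- fs) f].
Proof.
move=> n1.
have [rs hT] := closed_field_poly_normal (chebT R[i] n).
have srs : size rs = n.
  move: n n1 hT => [|m] // _ hT.
  have [hs _] := chebT_size R[i] m.
  by move: hs; rewrite hT size_scale ?lead_coef_eq0 ?chebT_ne0 // size_prod_XsubC => -[].
set lc := lead_coef (chebT R[i] n) in hT.
have lc0 : lc != 0 by rewrite lead_coef_eq0 chebT_ne0.
case: rs hT srs => [|r0 rs'] hT srs; first by rewrite -srs in n1.
have h2 : (2%:R : R[i]) != 0 by rewrite pnatr_eq0.
exists (@Qf R[i] (2%:R * lc ^+ 2) r0 :: map (@Qf R[i] 1) rs'); split.
- by rewrite /= size_map.
- move=> f; rewrite inE => /orP [/eqP ->|/mapP [z zr ->]].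
    apply: Qf_irr; first by rewrite mulf_neq0 ?expf_neq0.
    by apply: (@root_not_pm1 _ _ _ _ _ hT); rewrite inE eqxx.
  apply: Qf_irr; first by rewrite oner_eq0.
  by apply: (@root_not_pm1 _ _ _ _ _ hT); rewrite inE zr orbT.
apply/eqP; rewrite -subr_eq0; apply/eqP; apply: poly2_eq0 => x y.
rewrite !hornerE /polyx /polyy horner_map hornerC /=.
rewrite big_cons hornerM hornerM Qf_eval horner_prod horner_prod big_map.
under eq_bigr do rewrite Qf_eval mul1r.
rewrite (@main_eval _ _ _ _ x y hT) big_cons; apply/eqP; rewrite subr_eq0; apply/eqP; ring.
Qed.
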